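(* Let $\Lambda\subseteq\Lambda_f\subset\mathbb{R}^n$ be nested lattices with Voronoi regions $\mathcal{V}$ and $\mathcal{V}_f$ respectively, and suppose the tiling condition $\mathcal{V}=(\Lambda_f\cap\mathcal{V})+\mathcal{V}_f$ holds (Minkowski sum). Then for every $\mathbf{x}\in\mathbb{R}^n$, $$[Q_{\Lambda_f}(\mathbf{x})]\bmod\Lambda=Q_{\Lambda_f}\big([\mathbf{x}]\bmod\Lambda\big).$$
   Context: For a lattice $L\subset\mathbb{R}^n$ with Voronoi region $\mathcal{V}_L$ (the set of points whose nearest lattice point is $\mathbf{0}$, ties broken systematically so that $\mathcal{V}_L$ is a fundamental domain), $Q_L(\mathbf{y})$ is the unique $\mathbf{t}\in L$ with $\mathbf{y}-\mathbf{t}\in\mathcal{V}_L$, and $[\mathbf{y}]\bmod L=\mathbf{y}-Q_L(\mathbf{y})$. *)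

(* Defs.v *)
From HB Require Import structures.
From mathcomp Require Import all_boot all_order all_algebra.
From mathcomp Require Import boolp classical_sets reals.
Set Implicit Arguments. Unset Strict Implicit. Unset Printing Implicit Defensive.
Import Order.TTheory GRing.Theory Num.Theory.
Local Open Scope ring_scope.
Local Open Scope classical_set_scope.

Definition sqnorm (R : realType) (n : nat) (v : 'rV[R]_n) : R :=
  \sum_(i < n) v ord0 i ^+ 2.

Definition is_lattice (R : realType) (n : nat) (L : set 'rV[R]_n) : Prop :=
  exists B : 'M[R]_n, B \in unitmx /\
    forall v, L v <-> exists z : 'rV[int]_n, v = map_mx (fun k : int => k%:~R) z *m B.

(* V is a Voronoi region of L (with ties broken so that V is a fundamental
   domain): every point of V has 0 as a nearest lattice point, and every
   y has a unique t in L with y - t in V. *)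
Definition is_voronoi (R : realType) (n : nat) (L V : set 'rV[R]_n) : Prop :=
  (forall v, V v -> forall t, L t -> sqnorm v <= sqnorm (v - t)) /\
  (forall y, exists! t, L t /\ V (y - t)).

Definition QL (R : realType) (n : nat) (L V : set 'rV[R]_n) (y : 'rV[R]_n) : 'rV[R]_n :=
  xget 0 [set t | L t /\ V (y - t)].

Definition modL (R : realType) (n : nat) (L V : set 'rV[R]_n) (y : 'rV[R]_n) : 'rV[R]_n :=
  y - QL L V y.

(* Main.v *)
Require Import Defs.
From HB Require Import structures.
From mathcomp Require Import all_boot all_order all_algebra.
From mathcomp Require Import boolp classical_sets reals.
Import Order.TTheory GRing.Theory Num.Theory.
Local Open Scope ring_scope.
Local Open Scope classical_set_scope.

Lemma QL_spec (R : realType) (n : nat) (L V : set 'rV[R]_n) y :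
  is_voronoi L V -> L (QL L V y) /\ V (y - QL L V y).
Proof.
move=> [_ H]; have [t [Ht _]] := H y.
by have := @xgetPex _ 0 [set t | L t /\ V (y - t)] (ex_intro _ t Ht).
Qed.

Lemma QL_eq (R : realType) (n : nat) (L V : set 'rV[R]_n) y t :
  is_voronoi L V -> L t -> V (y - t) -> QL L V y = t.
Proof.
move=> hv Lt Vt; have [L1 V1] := @QL_spec _ _ L V y hv.
move: hv => [_ H]; have [u [_ Hu]] := H y.
by rewrite -(Hu _ (conj L1 V1)) -(Hu _ (conj Lt Vt)).
Qed.

Lemma lat_add (R : realType) (n : nat) (L : set 'rV[R]_n) a b :
  is_lattice L -> L a -> L b -> L (a + b).
Proof.
move=> [B [_ HB]] /HB [za ->] /HB [zb ->]; apply/HB; exists (za + zb).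
rewrite -mulmxDl; congr (_ *m _); apply/matrixP => i j.
by rewrite !mxE rmorphD.
Qed.

Theorem lemma6 (R : realType) (n : nat) (L Lf V Vf : set 'rV[R]_n) :
  is_lattice L -> is_lattice Lf -> L `<=` Lf ->
  is_voronoi L V -> is_voronoi Lf Vf ->
  (forall y, V y <-> exists a b, (Lf `&` V) a /\ Vf b /\ y = a + b) ->
  forall x : 'rV[R]_n, modL L V (QL Lf Vf x) = QL Lf Vf (modL L V x).
Proof.
move=> hL hLf sub hV hVf til x.
rewrite /modL.
set s := QL L V x.
have [Ls Vs] := @QL_spec _ _ L V x hV.
have [a [b [[Lfa Va] [Vfb e]]]] := (til (x - s)).1 Vs.
have Hr : QL Lf Vf (x - s) = a.
  by apply: QL_eq => //; rewrite e addrC addKr.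
have Hq : QL Lf Vf x = s + a.
  apply: QL_eq => //; first exact: lat_add (sub _ Ls) Lfa.
  have -> : x - (s + a) = b by rewrite opprD addrA e addrC addKr.
  done.
rewrite Hr Hq (@QL_eq _ _ L V (s + a) s) //; first by rewrite addrC addKr.
by rewrite addrC addKr.
Qed.
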